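(* Let $(R,\mathfrak{m})$ be a Noetherian local domain, let $J$ be an integrally closed $\mathfrak{m}$-primary ideal of $R$, and let $I$ be an ideal containing $J$. If $M$ is a finitely generated torsion-free $R$-module, then $$\ell(IM/JM)\geq \overline{\ell}(I/J)\cdot\operatorname{rank} M.$$
   Context: For ideals $J\subseteq I$, $\overline{\ell}(I/J)$ denotes the length of the longest chain of integrally closed ideals between $J$ and $I$. $\ell(\cdot)$ denotes length. *)

(* Defs.v *)
From HB Require Import structures.
From mathcomp Require Import all_boot all_order all_algebra.
From mathcomp Require Import boolp classical_sets constructive_ereal ereal.
Set Implicit Arguments. Unset Strict Implicit. Unset Printing Implicit Defensive.
Import Order.TTheory GRing.Theory Num.Theory.
Local Open Scope ring_scope.

Section CommAlg.
Variable R : idomainType.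

Definition is_ideal (I : R -> Prop) : Prop :=
  [/\ I 0, (forall x y, I x -> I y -> I (x + y)) & (forall r x, I x -> I (r * x))].

Definition psubset {T} (A B : T -> Prop) : Prop := forall x, A x -> B x.
Definition pequiv {T} (A B : T -> Prop) : Prop := forall x, A x <-> B x.
Definition pstrict {T} (A B : T -> Prop) : Prop :=
  psubset A B /\ exists x, B x /\ ~ A x.

Definition is_maximal_ideal (m : R -> Prop) : Prop :=
  [/\ is_ideal m, ~ m 1 &
      forall I, is_ideal I -> psubset m I -> pequiv I m \/ I 1].

Definition noetherian : Prop :=
  forall f : nat -> R -> Prop, (forall n, is_ideal (f n)) ->
    (forall n, psubset (f n) (f n.+1)) ->
    exists N, forall n, (N <= n)%N -> pequiv (f n) (f N).

Definition local_with (m : R -> Prop) : Prop :=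
  is_maximal_ideal m /\ forall n, is_maximal_ideal n -> pequiv n m.

Definition radical (J : R -> Prop) : R -> Prop := fun x => exists n, J (x ^+ n).

Definition is_primary (J : R -> Prop) : Prop :=
  [/\ is_ideal J, ~ J 1 &
      forall x y, J (x * y) -> ~ J x -> radical J y].

Definition m_primary (m J : R -> Prop) : Prop :=
  is_primary J /\ pequiv (radical J) m.

Definition ideal_mul (I J : R -> Prop) : R -> Prop := fun x =>
  exists s : seq (R * R), (forall p, p \in s -> I p.1 /\ J p.2) /\
    x = \sum_(p <- s) p.1 * p.2.

Fixpoint ideal_pow (I : R -> Prop) (n : nat) : R -> Prop :=
  match n with
  | 0 => fun _ => True
  | n'.+1 => ideal_mul (ideal_pow I n') I
  end.

Definition integral_over_ideal (I : R -> Prop) (x : R) : Prop :=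
  exists n : nat, exists a : nat -> R, (0 < n)%N /\
    (forall i, (1 <= i <= n)%N -> ideal_pow I i (a i)) /\
    x ^+ n + \sum_(1 <= i < n.+1) a i * x ^+ (n - i) = 0.

Definition integrally_closed_ideal (I : R -> Prop) : Prop :=
  is_ideal I /\ forall x, integral_over_ideal I x -> I x.

(* supremum (in the extended rationals (only naturals and +oo, -oo occur)) of a set of natural numbers *)
Definition nat_sup (P : nat -> Prop) : \bar rat :=
  ereal_sup [set ((n%:R : rat)%:E)%E | n in P].

(* \bar{l}(I/J): longest chain I_0 ⊊ I_1 ⊊ ... ⊊ I_k of integrally closed
   ideals with J ⊆ I_0 and I_k ⊆ I; its length is k. *)
Definition icl_chain_length (I J : R -> Prop) : \bar rat :=
  nat_sup (fun k => exists C : nat -> R -> Prop,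
    (forall i, (i <= k)%N -> integrally_closed_ideal (C i)) /\
    psubset J (C 0%N) /\ psubset (C k) I /\
    (forall i, (i < k)%N -> pstrict (C i) (C i.+1))).

Variable M : lmodType R.

Definition is_submodule (N : M -> Prop) : Prop :=
  [/\ N 0, (forall x y, N x -> N y -> N (x + y)) &
      (forall (r : R) x, N x -> N (r *: x))].

Definition ideal_smul (I : R -> Prop) : M -> Prop := fun x =>
  exists s : seq (R * M), (forall p, p \in s -> I p.1) /\
    x = \sum_(p <- s) p.1 *: p.2.

(* l(A/B) for submodules B ⊆ A, via the correspondence theorem: the supremum
   of lengths k of chains of submodules N_0 ⊊ ... ⊊ N_k with B ⊆ N_0, N_k ⊆ A *)
Definition quot_length (A B : M -> Prop) : \bar rat :=
  nat_sup (fun k => exists N : nat -> M -> Prop,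
    (forall i, (i <= k)%N -> is_submodule (N i)) /\
    psubset B (N 0%N) /\ psubset (N k) A /\
    (forall i, (i < k)%N -> pstrict (N i) (N i.+1))).

Definition fin_gen_module : Prop :=
  exists s : seq M, forall x : M, exists c : 'I_(size s) -> R,
    x = \sum_(i < size s) c i *: s`_i.

Definition torsion_free : Prop :=
  forall (r : R) (x : M), r *: x = 0 -> r = 0 \/ x = 0.

Definition lin_indep (n : nat) (v : 'I_n -> M) : Prop :=
  forall c : 'I_n -> R, \sum_(i < n) c i *: v i = 0 -> forall i, c i = 0.

(* rank of M over the domain R: maximal number of R-linearly independent
   elements (= dim_K (K ⊗_R M), K = Frac R) *)
Definition module_rank : \bar rat :=
  nat_sup (fun n => exists v : 'I_n -> M, lin_indep v).

End CommAlg.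

(* Main.v *)
Require Import Defs.
From HB Require Import structures.
From mathcomp Require Import all_boot all_order all_algebra.
From mathcomp Require Import boolp classical_sets constructive_ereal ereal.
From mathcomp Require Import zify perm.
Import Order.TTheory GRing.Theory Num.Theory.
Local Open Scope ring_scope.

Module P1.
Local Open Scope ring_scope.

Section Ideals.
Variable R : idomainType.
Implicit Types (I J : R -> Prop).

Lemma ideal_sum I (T : Type) (r : seq T) (P : pred T) (F : T -> R) :
  is_ideal I -> (forall i, P i -> I (F i)) -> I (\sum_(i <- r | P i) F i).
Proof. by case=> I0 ID IM HF; apply: big_ind => //. Qed.

Lemma ideal_mul_ideal I J : is_ideal I -> is_ideal (ideal_mul I J).
Proof.
case=> I0 ID IM; split.
- by exists [::]; rewrite big_nil.
- move=> x y [s [Hs ->]] [t [Ht ->]]; exists (s ++ t); rewrite big_cat; split => //.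
  by move=> p; rewrite mem_cat => /orP[/Hs|/Ht].
- move=> r x [s [Hs ->]]; exists [seq (r * p.1, p.2) | p <- s]; split.
    move=> p /mapP[q /Hs [Hq1 Hq2] ->] /=; split => //; exact: IM.
  by rewrite big_map mulr_sumr; apply: eq_bigr => p _ /=; rewrite mulrA.
Qed.

Lemma ideal_pow_ideal J n : is_ideal (ideal_pow J n).
Proof.
elim: n => [|n IH]; first by split.
exact: ideal_mul_ideal.
Qed.

Lemma ideal_pow1 J a : J a -> ideal_pow J 1 a.
Proof.
move=> Ja; exists [:: (1, a)]; split; last by rewrite big_seq1 mul1r.
by move=> p; rewrite inE => /eqP -> /=.
Qed.

Lemma ideal_pow_mul J a b x y :
  ideal_pow J a x -> ideal_pow J b y -> ideal_pow J (a + b) (x * y).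
Proof.
elim: b y => [|b IH] y Hx.
  by move=> _; rewrite addn0 mulrC; case: (ideal_pow_ideal J a) => _ _; apply.
move=> [s [Hs ->]]; rewrite addnS; exists [seq (x * p.1, p.2) | p <- s]; split.
  by move=> p /mapP[q /Hs [Hq1 Hq2] ->] /=; split => //; apply: IH.
by rewrite big_map mulr_sumr; apply: eq_bigr => p _ /=; rewrite mulrA.
Qed.

Lemma ideal_pow_anti J a b x : (a <= b)%N -> ideal_pow J b x -> ideal_pow J a x.
Proof.
elim: b x => [|b IH] x; first by rewrite leqn0 => /eqP ->.
rewrite leq_eqVlt => /orP[/eqP -> //|]; rewrite ltnS => Hab Hx; apply: IH => //.
case: Hx => s [Hs ->]; rewrite big_seq; apply: ideal_sum; first exact: ideal_pow_ideal.
move=> p /Hs [Hp1 _]; rewrite mulrC.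
by case: (ideal_pow_ideal J b) => _ _; apply.
Qed.

Definition wt J d (p : {poly R}) := forall k, ideal_pow J (d - k) p`_k.

Lemma wt0 J d : wt J d 0.
Proof. by move=> k; rewrite coef0; case: (ideal_pow_ideal J (d - k)). Qed.

Lemma wtD J d p q : wt J d p -> wt J d q -> wt J d (p + q).
Proof. by move=> Hp Hq k; rewrite coefD; case: (ideal_pow_ideal J (d - k)) => _ HD _; apply: HD. Qed.

Lemma wtN J d p : wt J d p -> wt J d (- p).
Proof.
move=> Hp k; rewrite coefN -mulN1r.
by case: (ideal_pow_ideal J (d - k)) => _ _; apply.
Qed.

Lemma wtM J d e p q : wt J d p -> wt J e q -> wt J (d + e) (p * q).
Proof.
move=> Hp Hq k; rewrite coefM; apply: ideal_sum; first exact: ideal_pow_ideal.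
move=> [i /= Hi] _.
apply: (@ideal_pow_anti J _ ((d - i) + (e - (k - i)))%N); last exact: ideal_pow_mul.
rewrite ltnS in Hi; lia.
Qed.

Lemma wt_sum J d (I : finType) (F : I -> {poly R}) :
  (forall i, wt J d (F i)) -> wt J d (\sum_i F i).
Proof. by move=> H; apply: big_ind => //; [exact: wt0|exact: wtD]. Qed.

Lemma wt1 J : wt J 0 1.
Proof. by move=> k; rewrite sub0n. Qed.

Lemma wt_prod J m (F : 'I_m -> {poly R}) :
  (forall i, wt J 1 (F i)) -> wt J m (\prod_i F i).
Proof.
elim: m F => [|m IH] F H; first by rewrite big_ord0; exact: wt1.
rewrite big_ord_recr /=; have := @wtM J _ _ _ _ (IH (fun i => F (widen_ord (leqnSn m) i)) (fun i => H _)) (H ord_max).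
by rewrite addn1.
Qed.

Lemma wt_charpoly J m (A : 'M[R]_m) :
  is_ideal J -> (forall i j, J (A i j)) -> wt J m (char_poly A).
Proof.
move=> HJ HA; rewrite /char_poly /determinant; apply: wt_sum => s.
have H : wt J m (\prod_i char_poly_mx A i (s i)).
  apply: wt_prod => i k; rewrite /char_poly_mx !mxE coefB coefMn coefX coefC.
  case: k => [|k]; last by rewrite subSS sub0n.
  rewrite subn0 /= mul0rn sub0r; apply/ideal_pow1.
  by case: HJ => _ _ HM; rewrite -mulN1r; apply: HM.
case: (odd_perm s); rewrite ?expr1 ?expr0 ?mulN1r ?mul1r //; exact: wtN.
Qed.

End Ideals.

End P1.
Import P1.

Module P2.
Local Open Scope ring_scope.

Section Frac.
Variable R : idomainType.
Local Notation tofrac := (@FracField.tofrac R).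
Local Notation "x %:F" := (tofrac x).

Lemma frac_repr (f : {fraction R}) : exists a b, b != 0 /\ f = a%:F / b%:F.
Proof.
elim/quotW: f => x; exists (\n_x), (\d_x); split; first exact: denom_ratioP.
apply/(@mulIf _ (\d_x)%:F); first by rewrite tofrac_eq0 denom_ratioP.
rewrite mulfVK ?tofrac_eq0 ?denom_ratioP //.
unlock tofrac. rewrite -[_ * _]/(FracField.mul _ _) -FracField.pi_mul /FracField.mulf.
apply/eqmodP => /=. rewrite FracField.equivfE /= !numden_Ratio ?mulf_neq0 ?oner_eq0 ?denom_ratioP //.
by rewrite !mulr1 mulrC.
Qed.

Lemma clear_denoms (s : seq {fraction R}) :
  exists d : R, d != 0 /\ forall f, f \in s -> exists a, d%:F * f = a%:F.
Proof.
elim: s => [|f s [d [d0 Hd]]]; first by exists 1; split => //; rewrite oner_eq0.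
have [a [b [b0 ->]]] := frac_repr f.
exists (d * b); split; first by rewrite mulf_neq0.
move=> g; rewrite inE => /orP[/eqP ->|/Hd [c Hc]].
  exists (d * a); rewrite !tofracM -mulrA [X in _ * X]mulrCA divff ?tofrac_eq0 //.
  by rewrite mulr1.
by exists (b * c); rewrite tofracM mulrAC Hc tofracM mulrC.
Qed.

Lemma dom_ker n j (A : 'M[R]_(n, j)) : (j < n)%N ->
  exists c : 'rV[R]_n, c != 0 /\ c *m A = 0.
Proof.
move=> jn; set A' := map_mx tofrac A.
have Kn0 : kermx A' != 0.
  rewrite kermx_eq0 /row_free; apply/negP => /eqP Hr.
  by have := rank_leq_col A'; rewrite Hr leqNgt jn.
have [i Hi] : exists i, row i (kermx A') != 0.
  apply/existsP; apply: contraR Kn0; rewrite negb_exists => /forallP H.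
  by apply/eqP/row_matrixP => i; rewrite row0; apply/eqP; move: (H i); rewrite negbK.
set c' := row i (kermx A').
have Hc' : c' *m A' = 0 by rewrite -row_mul mulmx_ker row0.
have [d [d0 Hd]] := clear_denoms [seq c' 0 l | l <- enum 'I_n].
have E : forall l, exists a, d%:F * c' 0 l == a%:F.
  move=> l; have [a Ha] := Hd (c' 0 l) (map_f _ (mem_enum _ l)).
  by exists a; rewrite Ha.
pose c := \row_l xchoose (E l).
have Hc : map_mx tofrac c = d%:F *: c'.
  apply/rowP => l; rewrite !mxE; apply/esym/eqP.
  by have := xchooseP (E l); rewrite [in X in _ -> X]mxE.
exists c; split.
  apply/eqP => c0; move: Hc; rewrite c0 map_mx0 => /esym/eqP.
  rewrite scalemx_eq0 tofrac_eq0 (negbTE d0) /= => /eqP c'0.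
  by move: Hi; rewrite -/c' c'0 eqxx.
have tinj : injective tofrac by move=> p q /eqP; rewrite tofrac_eq => /eqP.
have H0 : map_mx tofrac (c *m A) = 0 by rewrite map_mxM Hc -scalemxAl -/A' Hc' scaler0.
apply/rowP => l; apply: tinj; move/matrixP: H0 => /(_ 0 l).
by rewrite [in X in X -> _]mxE => ->; rewrite !mxE tofrac0.
Qed.
End Frac.

End P2.
Import P2.

Module P3.
Local Open Scope ring_scope.

Section Mod.
Variable R : idomainType.
Variable M : lmodType R.

Lemma sub_sum (N : M -> Prop) (T : Type) (r : seq T) (P : pred T) (F : T -> M) :
  is_submodule N -> (forall i, P i -> N (F i)) -> N (\sum_(i <- r | P i) F i).
Proof. by case=> N0 ND NZ HF; apply: big_ind. Qed.

Lemma smul_submod (K : R -> Prop) : is_ideal K -> is_submodule (@ideal_smul R M K).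
Proof.
case=> K0 KD KM; split.
- by exists [::]; rewrite big_nil.
- move=> x y [s [Hs ->]] [t [Ht ->]]; exists (s ++ t); rewrite big_cat; split => //.
  by move=> p; rewrite mem_cat => /orP[/Hs|/Ht].
- move=> r x [s [Hs ->]]; exists [seq (r * p.1, p.2) | p <- s]; split.
    by move=> p /mapP[q /Hs Hq ->] /=; exact: KM.
  by rewrite big_map scaler_sumr; apply: eq_bigr => p _ /=; rewrite scalerA.
Qed.

Lemma smul_mono (K K' : R -> Prop) :
  psubset K K' -> psubset (@ideal_smul R M K) (@ideal_smul R M K').
Proof. by move=> H z [s [Hs ->]]; exists s; split => // p /Hs /H. Qed.

Lemma smul_in (K : R -> Prop) r (z : M) : K r -> @ideal_smul R M K (r *: z).
Proof.
move=> Kr; exists [:: (r, z)]; split; last by rewrite big_seq1.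
by move=> p; rewrite inE => /eqP ->.
Qed.

Lemma smul_gen (K : R -> Prop) m (g : 'I_m -> M) : is_ideal K ->
  (forall z, exists c : 'I_m -> R, z = \sum_i c i *: g i) ->
  forall w, @ideal_smul R M K w ->
  exists a : 'I_m -> R, (forall t, K (a t)) /\ w = \sum_t a t *: g t.
Proof.
case=> K0 KD KM Hg w [s [Hs Hw]]; rewrite {w}Hw; elim: s Hs => [|p s IH] Hs.
  by exists (fun _ => 0); split => //; rewrite big_nil big1 // => t _; rewrite scale0r.
rewrite big_cons; have [|a [Ha ->]] := IH; first by move=> q qs; apply: Hs; rewrite inE qs orbT.
have [c ->] := Hg p.2.
have Kp : K p.1 by apply: Hs; rewrite inE eqxx.
exists (fun t => p.1 * c t + a t); split; first by move=> t; apply: KD; [rewrite mulrC; exact: KM|exact: Ha].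
rewrite scaler_sumr -big_split /=; apply: eq_bigr => t _.
by rewrite scalerDl scalerA.
Qed.

Lemma dep_span n j (u : 'I_n -> M) (y : 'I_j -> M) : (j < n)%N ->
  (forall i, exists b : 'I_j -> R, u i = \sum_t b t *: y t) ->
  exists c : 'I_n -> R, (exists i, c i != 0) /\ \sum_i c i *: u i = 0.
Proof.
move=> jn Hb; have [b Hbi] := choice Hb.
have [c [c0 cA]] := @dom_ker R _ _ (\matrix_(i, t) b i t) jn.
exists (fun i => c 0 i); split.
  apply/existsP; apply: contraR c0; rewrite negb_exists => /forallP H.
  by apply/eqP/rowP => i; rewrite mxE; apply/eqP; move: (H i); rewrite negbK.
under eq_bigr => i _ do rewrite Hbi scaler_sumr.
rewrite exchange_big /=; apply: big1 => t _.
under eq_bigr => i _ do rewrite scalerA.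
rewrite -scaler_suml; move/matrixP: cA => /(_ 0 t); rewrite !mxE => H.
have -> : (\sum_i c 0 i * b i t) = 0.
  by rewrite -[RHS]H; apply: eq_bigr => i _; rewrite mxE.
by rewrite scale0r.
Qed.

Lemma det_trick m (g : 'I_m -> M) (Y : M -> Prop) (A : 'M[R]_m) (x : R) :
  is_submodule Y -> (forall s, Y (x *: g s - \sum_t A s t *: g t)) ->
  forall u, Y ((char_poly A).[x] *: g u).
Proof.
move=> HY Hs u.
pose B := map_mx (horner_eval x) (char_poly_mx A).
have HB : forall s t, B s t = x *+ (s == t) - A s t.
  by move=> s t; rewrite !mxE horner_evalE hornerD hornerN hornerMn hornerX hornerC.
have HBs : forall s, \sum_t B s t *: g t = x *: g s - \sum_t A s t *: g t.
  move=> s; under eq_bigr => t _ do rewrite HB scalerBl.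
  rewrite sumrB; congr (_ - _); rewrite (bigD1 s) //= eqxx mulr1n big1 ?addr0 //.
  by move=> t /negbTE; rewrite eq_sym => ->; rewrite mulr0n scale0r.
have H1 : Y (\sum_s \adj B u s *: \sum_t B s t *: g t).
  by apply: sub_sum => // s _; case: HY => _ _; apply; rewrite HBs.
have E : \sum_s \adj B u s *: \sum_t B s t *: g t = \det B *: g u.
  under eq_bigr => s _ do rewrite scaler_sumr.
  rewrite exchange_big /=.
  under eq_bigr => t _ do under eq_bigr => s _ do rewrite scalerA.
  under eq_bigr => t _ do rewrite -scaler_suml.
  have Ht : forall t, \sum_s \adj B u s * B s t = \det B *+ (u == t).
    by move=> t; move/matrixP: (mul_adj_mx B) => /(_ u t); rewrite !mxE.
  rewrite (bigD1 u) //= Ht eqxx mulr1n big1 ?addr0 // => t ut.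
  by rewrite Ht eq_sym (negbTE ut) mulr0n scale0r.
move: H1; rewrite E /B det_map_mx. done.
Qed.

End Mod.

End P3.
Import P3.

Module P4.
Local Open Scope ring_scope.

Section Step.
Variable R : idomainType.
Variable M : lmodType R.

Lemma charpoly_integral (K : R -> Prop) m (A : 'M[R]_m) x :
  is_ideal K -> (forall i j, K (A i j)) -> (0 < m)%N -> (char_poly A).[x] = 0 ->
  integral_over_ideal K x.
Proof.
move=> HK HA m0 H0; set p := char_poly A.
have Hw := @wt_charpoly R K m A HK HA.
exists m, (fun i => p`_(m - i)); split => //; split.
  move=> i /andP[i1 im]; have := Hw (m - i)%N; rewrite subKn //.
have Hs : size p = m.+1 by rewrite size_char_poly.
have Hl : p`_m = 1.
  by have := char_poly_monic A; rewrite monicE lead_coefE Hs => /eqP.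
move: H0; rewrite horner_coef Hs big_ord_recr /= Hl mul1r => H0.
rewrite -[RHS]H0 addrC; congr (_ + _).
rewrite big_add1 /= -(big_mkord xpredT (fun i => p`_i * x ^+ i)).
by rewrite [RHS]big_nat_rev /= add0n.
Qed.

Definition Qm (K : R -> Prop) (x : R) (y : nat -> M) (j : nat) : M -> Prop :=
  fun w => exists w1 (b : nat -> R), @ideal_smul R M K w1 /\
    w = w1 + x *: \sum_(i < j) b i *: y i.

Definition Yspan (y : nat -> M) (j : nat) : M -> Prop :=
  fun z => exists b : nat -> R, z = \sum_(i < j) b i *: y i.

Lemma Yspan_sub y j : is_submodule (Yspan y j).
Proof.
split.
- by exists (fun _ => 0); rewrite big1 // => i _; rewrite scale0r.
- move=> a c [b1 ->] [b2 ->]; exists (fun i => b1 i + b2 i).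
  by rewrite -big_split; apply: eq_bigr => i _; rewrite scalerDl.
- move=> r a [b ->]; exists (fun i => r * b i); rewrite scaler_sumr.
  by apply: eq_bigr => i _; rewrite scalerA.
Qed.

Lemma step (K : R -> Prop) (x : R) (g : seq M) n (v : 'I_n -> M) (y : nat -> M) j :
  integrally_closed_ideal K -> ~ K x ->
  (forall z, exists c : 'I_(size g) -> R, z = \sum_i c i *: g`_i) ->
  lin_indep v -> (j < n)%N -> exists z, ~ Qm K x y j (x *: z).
Proof.
move=> [HK Kcl] Kx Hg Hv jn.
apply: contrapT => Hno.
have Hall : forall z, Qm K x y j (x *: z).
  move=> z; apply: contrapT => Hz; apply: Hno; by exists z.
set m := size g.
have i0 : 'I_n := Ordinal (leq_ltn_trans (leq0n j) jn).
have [m0|mpos] := posnP m.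
  have Z : forall z : M, z = 0.
    move=> z; have [c ->] := Hg z; rewrite big1 // => i _.
    by exfalso; have := ltn_ord i; move: (nat_of_ord i) => k; rewrite -/m m0.
  have := Hv (fun _ => 1); rewrite big1 => [/(_ erefl i0)/eqP|i _]; last by rewrite (Z (v i)) scaler0.
  by rewrite oner_eq0.
have Ha : forall s : 'I_m, exists a : 'I_m -> R, (forall t, K (a t)) /\
    Yspan y j (x *: g`_s - \sum_t a t *: g`_t).
  move=> s; have [w1 [b [Hw1 E]]] := Hall g`_s.
  have [a [Ka Ea]] := @smul_gen R M K m (fun i : 'I_m => g`_i) HK Hg _ Hw1.
  exists a; split => //; rewrite E -Ea addrC addKr.
  exists (fun i => x * b i); rewrite scaler_sumr; apply: eq_bigr => i _.
  by rewrite scalerA.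
have [a Hai] := choice Ha.
pose A := \matrix_(s, t) a s t.
have HY : forall u : 'I_m, Yspan y j ((char_poly A).[x] *: g`_u).
  apply: det_trick; first exact: Yspan_sub.
  move=> s; have [_ H] := Hai s.
  by rewrite (eq_bigr (fun t => a s t *: g`_t)) // => t _; rewrite mxE.
set e := (char_poly A).[x].
have [e0|en0] := eqVneq e 0.
  apply: Kx; apply: Kcl; apply: (@charpoly_integral K m A x HK) => //.
  by move=> s t; rewrite mxE; case: (Hai s) => H _; exact: H.
have Hv' : forall i, exists b : 'I_j -> R, e *: v i = \sum_t b t *: y t.
  move=> i; have [c ->] := Hg (v i).
  have : Yspan y j (e *: \sum_i0 c i0 *: g`_i0).
    rewrite scaler_sumr; apply: sub_sum; first exact: Yspan_sub.
    move=> t _; rewrite scalerA mulrC -scalerA.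
    by case: (Yspan_sub y j) => _ _; apply; exact: HY.
  by case=> b ->; exists (fun t => b t).
have [c [[i ci] Hc]] := @dep_span R M _ _ _ _ jn Hv'.
have := Hv (fun i => c i * e); rewrite (eq_bigr (fun i => c i *: (e *: v i))).
  by move=> /(_ Hc i)/eqP; rewrite mulf_eq0 (negbTE ci) (negbTE en0).
by move=> k _; rewrite scalerA.
Qed.

End Step.

End P4.
Import P4.

Module P5.
Local Open Scope ring_scope.
Local Open Scope classical_set_scope.

Lemma ex_max (P : nat -> Prop) N k0 : P k0 -> (forall k, P k -> (k <= N)%N) ->
  exists k, P k /\ forall k', P k' -> (k' <= k)%N.
Proof.
elim: N => [|N IH] Pk0 HN.
  by exists k0; split => // k' /HN; rewrite leqn0 => /eqP ->.
have [PN|nPN] := pselect (P N.+1); first by exists N.+1.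
apply: IH => // k Pk; have := HN k Pk; rewrite leq_eqVlt => /orP[/eqP E|//].
by rewrite E in Pk.
Qed.

Lemma natsup_max (P : nat -> Prop) k : P k -> (forall k', P k' -> (k' <= k)%N) ->
  nat_sup P = ((k%:R : rat)%:E)%E.
Proof.
move=> Pk Hk; set S := [set ((n%:R : rat)%:E)%E | n in P].
have Sk : supremums S ((k%:R : rat)%:E)%E.
  split.
    by move=> _ [k' Pk' <-]; rewrite lee_fin ler_nat; exact: Hk.
  by move=> u Hu; apply: Hu; exists k.
rewrite /nat_sup /ereal_sup /supremum -/S ifF; last first.
  apply/eqP => S0; have : S ((k%:R : rat)%:E)%E by exists k.
  by rewrite S0.
case: xgetP => [y -> Sy|H]; first exact: (is_subset1_supremums Sy Sk).
by have := H _ Sk.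
Qed.

Lemma natsup_bounded (P : nat -> Prop) (r : rat) k0 : P k0 ->
  (forall k, P k -> (k%:R : rat) <= r) ->
  exists k, P k /\ nat_sup P = ((k%:R : rat)%:E)%E.
Proof.
move=> Pk0 Hr.
have r0 : 0 <= r by apply: le_trans (Hr _ Pk0).
have Hb : forall k, P k -> (k <= Num.bound r)%N.
  move=> k /Hr kr; have := archi_boundP r0; move=> /(le_lt_trans kr).
  by rewrite ltr_nat => /ltnW.
have [k [Pk Hk]] := @ex_max P (Num.bound r) k0 Pk0 Hb.
by exists k; split => //; apply: natsup_max.
Qed.

Local Open Scope ereal_scope.

Lemma natsup_mul (PA PB : nat -> Prop) (q : \bar rat) : PA 0%N -> PB 0%N ->
  (forall k n, PA k -> PB n -> (((k * n)%N%:R : rat)%:E) <= q) ->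
  nat_sup PA * nat_sup PB <= q.
Proof.
move=> PA0 PB0 H.
have q0 : 0 <= q by have := H _ _ PA0 PB0.
case: q q0 H => [r|_ _|//]; last exact: leey.
rewrite lee_fin => r0 H.
have [[n0 [Pn0 n0p]]|Hn] := pselect (exists n, PB n /\ (0 < n)%N); last first.
  have -> : nat_sup PB = 0.
    rewrite (@natsup_max _ 0%N) //. 
    move=> k' Pk'; rewrite leqn0; apply/negP => /negP kp.
    by apply: Hn; exists k'; split => //; rewrite lt0n.
  by rewrite mule0 lee_fin.
have [ka [Pka ->]] : exists k, PA k /\ nat_sup PA = ((k%:R : rat)%:E).
  apply: (@natsup_bounded _ r 0%N) => // k Pk.
  have := H _ _ Pk Pn0; rewrite lee_fin => /(le_trans _); apply.
  by rewrite ler_nat leq_pmulr.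
have [ka0|kap] := posnP ka; first by rewrite ka0 mul0e lee_fin.
have [nb [Pnb ->]] : exists n, PB n /\ nat_sup PB = ((n%:R : rat)%:E).
  apply: (@natsup_bounded _ r 0%N) => // n Pn.
  have := H _ _ Pka Pn; rewrite lee_fin => /(le_trans _); apply.
  by rewrite ler_nat leq_pmull.
by rewrite -EFinM -natrM; exact: H.
Qed.

Lemma natsup_ge (P : nat -> Prop) k : P k -> ((k%:R : rat)%:E) <= nat_sup P.
Proof.
move=> Pk.
have [[N HN]|HN] := pselect (exists N, forall k', P k' -> (k' <= N)%N).
  have [m [Pm Hm]] := @ex_max P N k Pk HN.
  by rewrite (@natsup_max P m Pm Hm) lee_fin ler_nat; exact: Hm.
set S := [set ((n%:R : rat)%:E)%E | n in P].
have Soo : supremums S +oo.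
  split; first by move=> ? _; exact: leey.
  move=> u Hu; case: u Hu => [r|//|] Hu.
  - exfalso; apply: HN; exists (Num.bound `|r|) => k' Pk'.
    have := Hu _ (ex_intro2 _ _ k' Pk' erefl); rewrite lee_fin => kr.
    have := archi_boundP (normr_ge0 r); move=> /(le_lt_trans (le_trans kr (ler_norm r))).
    by rewrite ltr_nat => /ltnW.
  - by have := Hu _ (ex_intro2 _ _ k Pk erefl); rewrite leeNy_eq.
rewrite /nat_sup /ereal_sup /supremum -/S ifF; last first.
  apply/eqP => S0; have : S ((k%:R : rat)%:E)%E by exists k.
  by rewrite S0.
case: xgetP => [y -> Sy|H]; last by have := H _ Soo.
by rewrite (is_subset1_supremums Sy Soo) leey.
Qed.

End P5.
Import P5.

Module P6.
Local Open Scope ring_scope.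

Section Chain.
Variable R : idomainType.
Variable M : lmodType R.
Local Notation Q := (@Qm R M).

Lemma Qm_ext (K : R -> Prop) x (y y' : nat -> M) j w :
  (forall i, (i < j)%N -> y i = y' i) -> Q K x y j w -> Q K x y' j w.
Proof.
move=> H [w1 [b [Hw ->]]]; exists w1, b; split => //; congr (_ + x *: _).
by apply: eq_bigr => i _; rewrite H.
Qed.

Lemma build (K : R -> Prop) x (g : seq M) n (v : 'I_n -> M) :
  integrally_closed_ideal K -> ~ K x ->
  (forall z, exists c : 'I_(size g) -> R, z = \sum_i c i *: g`_i) ->
  lin_indep v -> exists y : nat -> M, forall j, (j < n)%N -> ~ Q K x y j (x *: y j).
Proof.
move=> HK Kx Hg Hv.
suff : forall l, (l <= n)%N -> exists y : nat -> M, forall j, (j < l)%N -> ~ Q K x y j (x *: y j).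
  by move/(_ n (leqnn n)).
elim => [|l IH] ln; first by exists (fun _ => 0).
have [y Hy] := IH (ltnW ln).
have [z Hz] := @step R M K x g n v y l HK Kx Hg Hv ln.
exists (fun i => if i == l then z else y i) => j; rewrite ltnS leq_eqVlt => /orP[/eqP ->|jl].
  rewrite eqxx => HQ; apply: Hz; apply: Qm_ext HQ => i il.
  by rewrite (ltn_eqF il).
rewrite (ltn_eqF jl) => HQ; apply: (Hy j jl); apply: Qm_ext HQ => i ij.
by rewrite (ltn_eqF (ltn_trans ij jl)).
Qed.

Lemma Qm_sub (K : R -> Prop) x y j : is_ideal K -> is_submodule (Q K x y j).
Proof.
move=> HK; have [S0 SD SZ] := @smul_submod R M K HK; split.
- exists 0, (fun _ => 0); split => //.
  by rewrite big1 ?scaler0 ?addr0 // => i _; rewrite scale0r.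
- move=> a c [w1 [b1 [H1 ->]]] [w2 [b2 [H2 ->]]].
  exists (w1 + w2), (fun i => b1 i + b2 i); split; first exact: SD.
  rewrite -!addrA; congr (_ + _); rewrite addrCA -scalerDr -big_split /=.
  by congr (_ + x *: _); apply: eq_bigr => i _; rewrite scalerDl.
- move=> r a [w1 [b [H1 ->]]]; exists (r *: w1), (fun i => r * b i); split; first exact: SZ.
  rewrite scalerDr scalerA mulrC -scalerA scaler_sumr; congr (_ + x *: _).
  by apply: eq_bigr => i _; rewrite scalerA.
Qed.

Lemma Qm_smul (K : R -> Prop) x y j : psubset (@ideal_smul R M K) (Q K x y j).
Proof.
move=> w Hw; exists w, (fun _ => 0); split => //.
by rewrite big1 ?scaler0 ?addr0 // => i _; rewrite scale0r.
Qed.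

Lemma Qm_S (K : R -> Prop) x y j : psubset (Q K x y j) (Q K x y j.+1).
Proof.
move=> w [w1 [b [Hw ->]]]; exists w1, (fun i => if (i < j)%N then b i else 0).
split => //; rewrite big_ord_recr /= ltnn scale0r addr0; congr (_ + x *: _).
by apply: eq_bigr => i _; rewrite ltn_ord.
Qed.

Lemma Qm_wit (K : R -> Prop) x (y : nat -> M) j : is_ideal K -> Q K x y j.+1 (x *: y j).
Proof.
move=> HK; exists 0, (fun i => (i == j)%:R); split; first by case: (@smul_submod R M K HK).
rewrite add0r big_ord_recr /= eqxx scale1r big1 ?add0r // => i _.
by rewrite (ltn_eqF (ltn_ord i)) scale0r.
Qed.

Lemma Qm_up (K K' : R -> Prop) x y j : is_ideal K' -> psubset K K' -> K' x ->
  psubset (Q K x y j) (@ideal_smul R M K').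
Proof.
move=> HK' KK' Kx w [w1 [b [Hw ->]]]; have HS := @smul_submod R M K' HK'.
case: (HS) => _ SD _; apply: SD; first exact: smul_mono Hw.
rewrite scaler_sumr; apply: sub_sum => // i _; rewrite scalerA.
apply: smul_in; case: HK' => _ _; rewrite mulrC; apply => //.
Qed.

Lemma chain_exists (J I : R -> Prop) k (C : nat -> R -> Prop) (g : seq M) n (v : 'I_n -> M) :
  (forall i, (i <= k)%N -> integrally_closed_ideal (C i)) ->
  psubset J (C 0%N) -> psubset (C k) I ->
  (forall i, (i < k)%N -> pstrict (C i) (C i.+1)) ->
  (forall z, exists c : 'I_(size g) -> R, z = \sum_i c i *: g`_i) ->
  lin_indep v -> (0 < n)%N ->
  exists N : nat -> M -> Prop,
    (forall i, (i <= k * n)%N -> is_submodule (N i)) /\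
    psubset (@ideal_smul R M J) (N 0%N) /\ psubset (N (k * n)%N) (@ideal_smul R M I) /\
    (forall i, (i < k * n)%N -> pstrict (N i) (N i.+1)).
Proof.
move=> HC HJ HI Hst Hg Hv n0.
have Hc : forall i, exists p : R * (nat -> M), (i < k)%N ->
    [/\ C i.+1 p.1, ~ C i p.1 & forall j, (j < n)%N -> ~ Q (C i) p.1 p.2 j (p.1 *: p.2 j)].
  move=> i; case: (ltnP i k) => ik; last by exists (0, fun _ => 0).
  have [_ [x [Cx nCx]]] := Hst i ik.
  have [y Hy] := @build (C i) x g n v (HC i (ltnW ik)) nCx Hg Hv.
  by exists (x, y).
have [f Hf] := choice Hc.
pose N t := if ((divn t n) < k)%N then Q (C ((divn t n))) (f ((divn t n))).1 (f ((divn t n))).2 ((modn t n))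
            else @ideal_smul R M (C k).
exists N; split; [|split; [|split]].
- move=> t _; rewrite /N; case: ifP => tk.
    by apply: Qm_sub; exact: (HC _ (ltnW tk)).1.
  by apply: smul_submod; exact: (HC k (leqnn k)).1.
- rewrite /N div0n mod0n; case: ifP => k0 z Hz.
    by apply: Qm_smul; exact: (@smul_mono R M _ _ HJ _ Hz).
  move/negbT: k0; rewrite lt0n negbK => /eqP k0.
  by apply: (@smul_mono R M J) Hz => r /HJ; rewrite k0.
- by rewrite /N mulnK // ltnn => z /(@smul_mono R M _ _ HI).
move=> t tkn.
have ik : ((divn t n) < k)%N by rewrite ltn_divLR.
have jn : ((modn t n) < n)%N by rewrite ltn_pmod.
have Et : t.+1 = ((divn t n) * n + ((modn t n)).+1)%N by rewrite addnS -divn_eq.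
have [H1 H2 H3] := Hf _ ik.
have Nt : N t = Q (C ((divn t n))) (f ((divn t n))).1 (f ((divn t n))).2 ((modn t n)) by rewrite /N ik.
rewrite Nt; case: (ltnP ((modn t n)).+1 n) => jn'.
  have e1 : ((divn t.+1 n) = (divn t n))%N.
    by rewrite Et divnMDl // (divn_small jn') addn0.
  have e2 : ((modn t.+1 n) = ((modn t n)).+1)%N by rewrite Et modnMDl modn_small.
  rewrite /N e1 e2 ik; split; first exact: Qm_S.
  exists ((f ((divn t n))).1 *: (f ((divn t n))).2 ((modn t n))); split; last exact: H3.
  by apply: Qm_wit; exact: (HC _ (ltnW ik)).1.
have ej : ((modn t n)).+1 = n by apply/eqP; rewrite eqn_leq jn' jn.
have Et' : t.+1 = (((divn t n)).+1 * n)%N by rewrite Et ej mulSn addnC.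
have Hsub : psubset (@ideal_smul R M (C ((divn t n)).+1)) (N t.+1).
  rewrite /N Et' mulnK //; case: ifP => ik'.
    by move=> z Hz; rewrite modnMl; apply: Qm_smul.
  have -> : ((divn t n)).+1 = k by apply/eqP; rewrite eqn_leq ik leqNgt ik'.
  by [].
have HCi : is_ideal (C ((divn t n)).+1) by exact: (HC _ ik).1.
split.
  move=> z Hz; apply: Hsub; apply: (@Qm_up _ _ _ _ _ HCi _ H1 _ Hz).
  by case: (Hst _ ik).
exists ((f ((divn t n))).1 *: (f ((divn t n))).2 ((modn t n))); split; last exact: H3.
by apply: Hsub; apply: smul_in.
Qed.

End Chain.

End P6.
Import P6.

Theorem corollary2p2 (R : idomainType) (m J I : R -> Prop) (M : lmodType R) :
  noetherian R -> local_with m ->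
  integrally_closed_ideal J -> m_primary m J ->
  is_ideal I -> psubset J I ->
  fin_gen_module M -> torsion_free M ->
  (icl_chain_length I J * module_rank M <= quot_length (@ideal_smul R M I) (@ideal_smul R M J))%E.
Proof.
move=> _ _ HJ _ _ HJI [g Hg] _.
rewrite /icl_chain_length /module_rank /quot_length.
apply: natsup_mul.
- exists (fun _ => J); split; first by move=> i _.
  by split => //; split => // i.
- by exists (fun i : 'I_0 => 0) => c _ [].
move=> k n [C [HC [HJ0 [HkI Hst]]]] [v Hv].
have [n0|npos] := posnP n.
  rewrite n0 muln0; apply: natsup_ge; exists (fun _ => @ideal_smul R M J).
  split; first by move=> i _; apply: smul_submod; case: HJ.
  split => //; split; first exact: (@smul_mono R M _ _ HJI).
  by move=> i.
apply: natsup_ge.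
exact: (@chain_exists R M J I k C g n v HC HJ0 HkI Hst Hg Hv npos).
Qed.
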